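(* Let $(Q,\mathcal M)$ be a modulated quiver with $Q$ connected, and suppose that every connected component of its complex quiver $\Gamma$ is one-cycle. Then: (1) $Q$ contains at most one cycle; (2) if $Q$ is a tree, then $Q$ contains a chain $v_1-v_2-\cdots-v_n$ with $n\ge2$ such that $\mathcal M(v_1)\ne\mathbb C$, $\mathcal M(v_n)\ne\mathbb C$ and $\mathcal M(v_i)=\mathbb C$ for all $2\le i\le n-1$.
   Context: Quivers $Q=(Q_0,Q_1,s,t)$ are finite; an arrow $\alpha$ goes from $s(\alpha)$ to $t(\alpha)$. A chain in a quiver is a sequence of vertices $u_1-u_2-\cdots-u_n$ together with pairwise distinct arrows $a_1,\dots,a_{n-1}$ such that each $a_k$ goes from $u_k$ to $u_{k+1}$ or from $u_{k+1}$ to $u_k$. A cycle is a cycle (loops included) of the underlying unoriented multigraph; $Q$ is a tree if its underlying graph is a tree. A connected quiver is one-cycle if its underlying (unoriented multi)graph, loops included, contains exactly one cycle. A modulation $\mathcal M$ of $Q$ assigns to each vertex $i$ a division ring $\mathcal M(i)\in\{\mathbb R,\mathbb C,\mathbb H\}$ ($\mathbb H$ the real quaternions) and to each arrow $\alpha$ a simple $\mathcal M(t(\alpha))$-$\mathcal M(s(\alpha))$-bimodule $\mathcal M(\alpha)$ on which $\mathbb R$ acts centrally; $(Q,\mathcal M)$ is a modulated quiver. Up to isomorphism there is exactly one such simple bimodule for each pair of these division rings other than $(\mathbb C,\mathbb C)$, and for $(\mathbb C,\mathbb C)$ there are exactly two: $\mathbb C$ with action $a\cdot z\cdot b=azb$,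 and $\overline{\mathbb C}$, which is $\mathbb C$ as a set with action $a\cdot z\cdot b=az\bar b$. The quiver $\Gamma$ of $(Q,\mathcal M)$: each $i\in Q_0$ with $\mathcal M(i)\in\{\mathbb R,\mathbb H\}$ gives one vertex $i$ of $\Gamma$; each $i$ with $\mathcal M(i)=\mathbb C$ gives two vertices $i,\bar i$. Each arrow $\alpha:i\to j$ of $Q$ gives arrows of $\Gamma$ as follows: if $\mathcal M(i)=\mathcal M(j)\in\{\mathbb R,\mathbb H\}$, one arrow $\alpha:i\to j$; if $\mathcal M(i)=\mathbb C$ and $\mathcal M(j)\in\{\mathbb R,\mathbb H\}$, arrows $\alpha:i\to j$, $\bar\alpha:\bar i\to j$; if $\mathcal M(i)\in\{\mathbb R,\mathbb H\}$ and $\mathcal M(j)=\mathbb C$, arrows $\alpha:i\to j$, $\bar\alpha:i\to\bar j$; if $\{\mathcal M(i),\mathcal M(j)\}=\{\mathbb R,\mathbb H\}$, two arrows $\alpha,\bar\alpha:i\to j$; if $\mathcal M(i)=\mathcal M(j)=\mathbb C$ and $\mathcal M(\alpha)=\mathbb C$, arrows $\alpha:i\to j$, $\bar\alpha:\bar i\to\bar j$; if $\mathcal M(i)=\mathcal M(j)=\mathbb C$ and $\mathcal M(\alpha)=\overline{\mathbb C}$, arrows $\alpha:\bar i\to j$, $\bar\alpha:i\to\bar j$. *)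

(* Defs.v *)
From HB Require Import structures.
From mathcomp Require Import all_boot.
Set Implicit Arguments. Unset Strict Implicit. Unset Printing Implicit Defensive.

Record quiver := Quiver {
  vert : finType;
  arr  : finType;
  src  : arr -> vert;
  tgt  : arr -> vert }.

Section Graph.
Variable Q : quiver.

Definition joins (a : arr Q) (x y : vert Q) : bool :=
  ((src a == x) && (tgt a == y)) || ((src a == y) && (tgt a == x)).

Fixpoint walk (u : vert Q) (st : seq (arr Q * vert Q)) : bool :=
  if st is (a, v) :: r then joins a u v && walk v r else true.

(* A chain u_1 - u_2 - ... - u_n: the vertices are u :: map snd st and the
   arrows map fst st, which must be pairwise distinct. *)
Definition chain (u : vert Q) (st : seq (arr Q * vert Q)) : bool :=
  walk u st && uniq (map fst st).

Definition chain_end (u : vert Q) (st : seq (arr Q * vert Q)) : vert Q :=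
  last u (map snd st).

Definition joined (x y : vert Q) : Prop :=
  exists st, chain x st /\ chain_end x st = y.

Definition connected : Prop :=
  (exists x : vert Q, True) /\ forall x y : vert Q, joined x y.

(* A closed chain with at least one arrow, pairwise distinct arrows, and
   pairwise distinct vertices u_1, ..., u_n (u_{n+1} = u_1): a cycle of the
   underlying multigraph (loops: n = 1; two parallel arrows: n = 2). *)
Definition cycle_walk (u : vert Q) (st : seq (arr Q * vert Q)) : bool :=
  [&& st != [::], chain u st, uniq (map snd st) & chain_end u st == u].

Definition is_cycle (E : {set arr Q}) : Prop :=
  exists u st, cycle_walk u st /\ E = [set a | a \in map fst st].

Definition at_most_one_cycle : Prop :=
  forall E1 E2, is_cycle E1 -> is_cycle E2 -> E1 = E2.

Definition no_cycle : Prop := forall E, ~ is_cycle E.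

Definition is_tree : Prop := connected /\ no_cycle.

(* The connected component of x contains exactly one cycle
   (a cycle lies in the component of x iff its arrows are joined to x). *)
Definition component_one_cycle (x : vert Q) : Prop :=
  exists E, [/\ is_cycle E, (forall a, a \in E -> joined x (src a)) &
    forall E', is_cycle E' -> (forall a, a \in E' -> joined x (src a)) ->
      E' = E].

Definition all_components_one_cycle : Prop :=
  forall x : vert Q, component_one_cycle x.

End Graph.

Inductive divring := dR | dC | dH.

Definition divring_eqb (x y : divring) : bool :=
  match x, y with dR, dR | dC, dC | dH, dH => true | _, _ => false end.
Lemma divring_eqP : Equality.axiom divring_eqb.
Proof. by case; case; constructor. Qed.
HB.instance Definition _ := hasDecEq.Build divring divring_eqP.

(* A modulation of Q, up to isomorphism of the data: the division ring
   M i at every vertex, and for every arrow a the isomorphism class of the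
   simple bimodule M(a).  This class is determined by the endpoints except
   when M(src a) = M(tgt a) = C, in which case [cnj a] = true means
   M(a) = Cbar and [cnj a] = false means M(a) = C; [cnj a] is ignored
   otherwise. *)
Record modulation (Q : quiver) := Modulation {
  mdr : vert Q -> divring;
  cnj : arr Q -> bool }.

Section Gamma.
Variables (Q : quiver) (M : modulation Q).
Local Notation D := (mdr M).

(* vertices: (i,false) = i, and (i,true) = ibar, the latter only if M i = C *)
Definition gvert_ok (x : vert Q * bool) : bool := x.2 ==> (D x.1 == dC).
Definition GVert : finType := {x : vert Q * bool | gvert_ok x}.

(* an arrow of Q gives one arrow of Gamma if M(s)=M(t) in {R,H}, two otherwise;
   (a,false) = alpha, (a,true) = alphabar *)
Definition doubled (a : arr Q) : bool :=
  ~~ ((D (src a) == D (tgt a)) && (D (src a) != dC)).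
Definition garr_ok (p : arr Q * bool) : bool := p.2 ==> doubled p.1.
Definition GArr : finType := {p : arr Q * bool | garr_ok p}.

Definition gsrc_flag (a : arr Q) (b : bool) : bool :=
  match D (src a), D (tgt a) with
  | dC, dC => if cnj M a then ~~ b else b   (* C: a:i->j, abar:ibar->jbar;
                                               Cbar: a:ibar->j, abar:i->jbar *)
  | dC, _ => b                               (* a:i->j, abar:ibar->j *)
  | _, _ => false
  end.
Definition gtgt_flag (a : arr Q) (b : bool) : bool :=
  match D (src a), D (tgt a) with
  | dC, dC => b
  | _, dC => b                               (* a:i->j, abar:i->jbar *)
  | _, _ => false
  end.

Lemma gsrc_ok (a : arr Q) (b : bool) : gvert_ok (src a, gsrc_flag a b).
Proof.
rewrite /gvert_ok /gsrc_flag /=; case: (D (src a)); case: (D (tgt a)) => //; by case: (cnj M a); case: b.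
Qed.
Lemma gtgt_ok (a : arr Q) (b : bool) : gvert_ok (tgt a, gtgt_flag a b).
Proof.
rewrite /gvert_ok /gtgt_flag /=; case: (D (src a)); case: (D (tgt a)) => //; by case: b.
Qed.

Definition gsrc (p : GArr) : GVert :=
  exist _ (src (val p).1, gsrc_flag (val p).1 (val p).2)
          (gsrc_ok (val p).1 (val p).2).
Definition gtgt (p : GArr) : GVert :=
  exist _ (tgt (val p).1, gtgt_flag (val p).1 (val p).2)
          (gtgt_ok (val p).1 (val p).2).

Definition Gamma : quiver := Quiver gsrc gtgt.
End Gamma.

(* Main.v *)
Require Import Defs.
From mathcomp Require Import all_boot zify.
Set Implicit Arguments. Unset Strict Implicit. Unset Printing Implicit Defensive.

Section G.
Variable Q : quiver.
Implicit Types (P : nat -> vert Q) (A : nat -> arr Q) (x y z u v : vert Q) (a b : arr Q) (st s : seq (arr Q * vert Q)).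

Definition wf m P A := forall k, k < m -> joins (A k) (P k) (P k.+1).
Definition mkst m P A : seq (arr Q * vert Q) := [seq (A k, P k.+1) | k <- iota 0 m].

Lemma walk_cat x (s1 s2 : seq (arr Q * vert Q)) :
  walk x (s1 ++ s2) = walk x s1 && walk (last x (map snd s1)) s2.
Proof. by elim: s1 x => [|[a v] s IH] x //=; rewrite IH andbA. Qed.

Lemma iotaS0 m : iota 0 m.+1 = iota 0 m ++ [:: m].
Proof. by rewrite -addn1 iotaD. Qed.

Lemma wf_walk m P A : wf m P A ->
  walk (P 0) (mkst m P A) /\ last (P 0) (map snd (mkst m P A)) = P m.
Proof.
elim: m => [|m IH] H; first by [].
have [H1 H2] := IH (fun k hk => H k (ltnW hk)).
rewrite /mkst iotaS0 map_cat walk_cat map_cat last_cat /= -/(mkst m P A) H1 H2 /=.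
by rewrite H // andbT.
Qed.

Lemma size_mkst m P A : size (mkst m P A) = m.
Proof. by rewrite size_map size_iota. Qed.

Lemma map_fst_mkst m P A : map fst (mkst m P A) = map A (iota 0 m).
Proof. by rewrite -map_comp. Qed.
Lemma map_snd_mkst m P A : map snd (mkst m P A) = map (fun k => P k.+1) (iota 0 m).
Proof. by rewrite -map_comp. Qed.

Lemma mem_mkst m P A a : reflect (exists2 k, k < m & a = A k) (a \in map fst (mkst m P A)).
Proof.
rewrite map_fst_mkst; apply: (iffP mapP).
  by move=> [k]; rewrite mem_iota => /andP[_ Hk] ->; exists k.
by move=> [k Hk ->]; exists k; rewrite // mem_iota.
Qed.

Lemma uniq_map_iota (T : eqType) (f : nat -> T) m :
  (forall i j, i < j -> j < m -> f i != f j) -> uniq (map f (iota 0 m)).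
Proof.
move=> H; rewrite map_inj_in_uniq ?iota_uniq // => i j; rewrite !mem_iota /= => Hi Hj E.
case: (ltngtP i j) => // [lt|lt]; first by move: (H _ _ lt Hj); rewrite E eqxx.
by move: (H _ _ lt Hi); rewrite E eqxx.
Qed.

Lemma walk_wf d a0 x st : walk x st ->
  wf (size st) (nth d (x :: map snd st)) (nth a0 (map fst st)).
Proof.
rewrite /wf; elim: st x => [|[a v] s IH] x //=.
case/andP=> Hj Hw [|k] //=; rewrite ltnS => Hk; exact: IH Hw k Hk.
Qed.

Lemma nth_last_walk d x (s : seq (vert Q)) : nth d (x :: s) (size s) = last x s.
Proof. by elim: s x => [|y s IH] x //=. Qed.

Lemma joins_same a x y x' y' : joins a x y -> joins a x' y' ->
  (x = x' /\ y = y') \/ (x = y' /\ y = x').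
Proof.
rewrite /joins => /orP[]/andP[/eqP<- /eqP<-] /orP[]/andP[/eqP-> /eqP->]; auto.
Qed.

Definition reach x y := exists st, walk x st /\ last x (map snd st) = y.

Lemma reach_trans x y z : reach x y -> reach y z -> reach x z.
Proof.
move=> [s1 [H1 <-]] [s2 [H2 <-]]; exists (s1 ++ s2).
by rewrite walk_cat H1 H2 map_cat last_cat.
Qed.

Lemma wf_reach m P A k : wf m P A -> k <= m -> reach (P 0) (P k).
Proof.
move=> H Hk; have [H1 H2] := @wf_walk k P A (fun i hi => H i (leq_trans hi Hk)).
by exists (mkst k P A).
Qed.

Lemma walk_src_reach y st a : walk y st -> a \in map fst st ->
  reach y (src a) /\ reach y (tgt a).
Proof.
elim: st y => [|[b v] s IH] y //= /andP[Hj Hw]; rewrite inE => /orP[/eqP->|Ha].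
  have R0 : reach y y by exists [::].
  have R1 : reach y v by exists [:: (b, v)]; rewrite /= Hj.
  by case/orP: Hj => /andP[/eqP-> /eqP->].
have R1 : reach y v by exists [:: (b, v)]; rewrite /= Hj.
have [? ?] := IH v Hw Ha; split; exact: reach_trans R1 _.
Qed.

Lemma shorten_walk m P A : wf m P A -> exists m' P' A', [/\ wf m' P' A', P' 0 = P 0, P' m' = P m,
  (forall i j, i < j -> j <= m' -> P' i != P' j) &
  (forall k, k <= m' -> exists2 k0, k0 <= m & P' k = P k0)].
Proof.
elim/ltn_ind: m P A => m IH P A H.
case: (boolP [exists i : 'I_m.+1, exists j : 'I_m.+1, (i < j) && (P i == P j)]).
- case/existsP=> [[i Hi]] /existsP[[j Hj]] /= /andP[lij /eqP Eij].
  pose d := j - i.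
  pose P2 k := if k <= i then P k else P (k + d).
  pose A2 k := if k < i then A k else A (k + d).
  have Hd : 0 < d by rewrite subn_gt0.
  have lt : m - d < m by lia.
  have W2 : wf (m - d) P2 A2.
    move=> k Hk; rewrite /P2 /A2.
    case: (ltngtP k i) => [lki|lik|eki].
    + by apply: H; lia.
    + have -> : (k.+1 + d) = (k + d).+1 by lia.
      apply: H; lia.
    + subst k.
      have -> : i + d = j by lia.
      have -> : i.+1 + d = j.+1 by lia.
      rewrite Eij; apply: H; lia.
  have [m' [P' [A' [W' E0 Em In Sub]]]] := IH _ lt P2 A2 W2.
  exists m', P', A'; split => //.
  + rewrite Em /P2; case: ifP => Hc.
      have -> : m - d = i by lia.
      by rewrite Eij; congr P; lia.
    by congr P; lia.
  + move=> k Hk; have [k0 Hk0 ->] := Sub k Hk; rewrite /P2.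
    by case: ifP => Hc; [exists k0 | exists (k0 + d)] => //; lia.
- rewrite negb_exists => /forallP Hn.
  exists m, P, A; split => // [i j lij ljm|k Hk]; last by exists k.
  have ljm' : j < m.+1 by [].
  have := Hn (Ordinal (leq_ltn_trans (ltnW lij) ljm')).
  rewrite negb_exists => /forallP/(_ (Ordinal ljm')) /=.
  by rewrite lij.
Qed.

Lemma inj_chain m P A : wf m P A -> (forall i j, i < j -> j <= m -> P i != P j) ->
  chain (P 0) (mkst m P A).
Proof.
move=> H In; rewrite /chain (wf_walk H).1 map_fst_mkst /=.
apply: uniq_map_iota => i j lij ljm.
apply/eqP => E.
have Hi := H i (ltn_trans lij ljm); rewrite E in Hi.
case: (joins_same Hi (H j ljm)).
  by case=> E1 _; move: (In i j lij (ltnW ljm)); rewrite E1 eqxx.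
by case=> E1 _; move: (In i j.+1 (ltnW lij) ljm); rewrite E1 eqxx.
Qed.

Lemma wf_chain_end m P A : wf m P A -> chain_end (P 0) (mkst m P A) = P m.
Proof. by move=> H; rewrite /chain_end (wf_walk H).2. Qed.

Lemma reach_joined x y : reach x y -> joined x y.
Proof.
case=> st [Hw Hl]; case: st Hw Hl => [|s0 s'] Hw Hl.
  by exists [::]; rewrite /chain /chain_end /= -Hl.
set st := s0 :: s' in Hw Hl.
have H := walk_wf x s0.1 Hw.
have [m' [P' [A' [W' E0 Em In _]]]] := shorten_walk H.
exists (mkst m' P' A'); split.
  by rewrite -[x]/(nth x (x :: map snd st) 0) -E0; apply: inj_chain.
rewrite -[x]/(nth x (x :: map snd st) 0) -E0 wf_chain_end // Em.
by rewrite -(size_map snd) nth_last_walk.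
Qed.

Lemma mk_cycle m P A : 0 < m -> wf m P A -> P m = P 0 ->
  (forall i j, 0 < i -> i < j -> j <= m -> P i != P j) ->
  (forall i j, i < j -> j < m -> A i != A j) ->
  cycle_walk (P 0) (mkst m P A).
Proof.
move=> m0 H Hc Iv Ia; rewrite /cycle_walk /chain (wf_walk H).1 /=.
rewrite -size_eq0 size_mkst -lt0n m0 map_fst_mkst map_snd_mkst.
rewrite uniq_map_iota // uniq_map_iota; last by move=> i j lij ljm; apply: Iv.
by rewrite wf_chain_end // Hc eqxx.
Qed.

Lemma mkst_is_cycle m P A : 0 < m -> wf m P A -> P m = P 0 ->
  (forall i j, 0 < i -> i < j -> j <= m -> P i != P j) ->
  (forall i j, i < j -> j < m -> A i != A j) ->
  is_cycle [set a | a \in map fst (mkst m P A)].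
Proof. by move=> *; exists (P 0), (mkst m P A); split => //; apply: mk_cycle. Qed.

Lemma nb_cycle m P A : 0 < m -> wf m P A -> P m = P 0 ->
  (forall k, k.+1 < m -> A k != A k.+1) -> exists E, @is_cycle Q E.
Proof.
elim/ltn_ind: m P A => m IH P A m0 H Hc Hnb.
case: (boolP [exists i : 'I_m.+1, exists j : 'I_m.+1, [&& 0 < i, i < j & (P i == P j)]]).
- case/existsP=> [[i Hi]] /existsP[[j Hj]] /= /and3P[i0 lij /eqP Eij].
  apply: (IH (j - i) _ (fun k => P (i + k)) (fun k => A (i + k))).
  + lia.
  + lia.
  + by move=> k Hk; rewrite addnS; apply: H; lia.
  + by rewrite addn0 subnKC ?Eij // ltnW.
  + by move=> k Hk; rewrite addnS; apply: Hnb; lia.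
- rewrite negb_exists => /forallP Hn.
  have Iv : forall i j, 0 < i -> i < j -> j <= m -> P i != P j.
    move=> i j i0 lij ljm; have ljm' : j < m.+1 by [].
    have := Hn (Ordinal (leq_ltn_trans (ltnW lij) ljm')).
    by rewrite negb_exists => /forallP/(_ (Ordinal ljm')) /=; rewrite i0 lij.
  exists [set a | a \in map fst (mkst m P A)]; apply: mkst_is_cycle => //.
  move=> i j lij ljm; apply/eqP => E.
  have Hi := H i (ltn_trans lij ljm); rewrite E in Hi.
  case: (joins_same Hi (H j ljm)).
    by case=> _ E1; move: (Iv i.+1 j.+1 isT lij ljm); rewrite E1 eqxx.
  case=> _ E1; have [lt|ge] := ltnP i.+1 j.
    by move: (Iv i.+1 j isT lt (ltnW ljm)); rewrite E1 eqxx.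
  have eij : j = i.+1 by apply/eqP; rewrite eqn_leq ge lij.
  have Hm : i.+1 < m by rewrite -eij.
  by move: (Hnb i Hm); rewrite -eij E eqxx.
Qed.

Lemma noloop : no_cycle Q -> forall a, src a != tgt a.
Proof.
move=> Hn a; apply/negP => /eqP E; apply: (Hn [set b | b \in [:: a]]).
exists (src a), [:: (a, tgt a)]; split => //.
by rewrite /cycle_walk /chain /chain_end /= /joins !eqxx E eqxx.
Qed.

Lemma cycle_out x m (L : nat -> vert Q) (B : nat -> arr Q) : reach x (L 0) -> 0 < m ->
  wf m L B -> L m = L 0 ->
  (forall i j, 0 < i -> i < j -> j <= m -> L i != L j) ->
  (forall i j, i < j -> j < m -> B i != B j) ->
  exists F : {set arr Q}, [/\ is_cycle F, (forall b, b \in F -> reach x (src b)) &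
     forall b, b \in F <-> exists2 k, k < m & b = B k].
Proof.
move=> R m0 H Hc Iv Ia; exists [set b | b \in map fst (mkst m L B)]; split.
- exact: mkst_is_cycle.
- move=> b; rewrite inE => Hb.
  have [R1 _] := walk_src_reach (wf_walk H).1 Hb; exact: reach_trans R R1.
- by move=> b; rewrite inE; split => [/mem_mkst|/mem_mkst].
Qed.
End G.

Section Gam.
Variables (Q : quiver) (M : modulation Q).
Local Notation D := (mdr M).
Local Notation GV := (GVert M).
Local Notation GA := (GArr M).
Local Notation G := (Gamma M).

Definition pv (x : GV) : vert Q := (val x).1.
Definition pa (x : GA) : arr Q := (val x).1.

Lemma G_joins_proj (al : GA) (x y : GV) : @joins G al x y -> joins (pa al) (pv x) (pv y).
Proof. by rewrite /joins /= => /orP[]/andP[/eqP<- /eqP<-]; rewrite /pv /= !eqxx ?orbT. Qed.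

Lemma gsrc_flag_inj a b1 b2 : D (src a) = dC -> gsrc_flag M a b1 = gsrc_flag M a b2 -> b1 = b2.
Proof. by rewrite /gsrc_flag => ->; case: (D (tgt a)); case: (cnj M a); case: b1; case: b2. Qed.
Lemma gtgt_flag_inj a b1 b2 : D (tgt a) = dC -> gtgt_flag M a b1 = gtgt_flag M a b2 -> b1 = b2.
Proof. by rewrite /gtgt_flag => ->; case: (D (src a)); case: b1; case: b2. Qed.

Lemma local (al be : GA) (x w z : GV) : @joins G al x w -> @joins G be w z -> al != be ->
  pa al = pa be -> D (pv w) = dC -> src (pa al) != tgt (pa al) -> False.
Proof.
move=> J1 J2 Hne Ep Dw Hl.
have I1 : (@src G al == w) || (@tgt G al == w).
  by case/orP: J1 => /andP[h1 h2]; rewrite ?h1 ?h2 ?orbT.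
have I2 : (@src G be == w) || (@tgt G be == w).
  by case/orP: J2 => /andP[h1 h2]; rewrite ?h1 ?h2 ?orbT.
move: al be Hne Ep Hl I1 I2 {J1 J2} => [[a1 b1] h1] [[a2 b2] h2].
rewrite /pa /= => Hne Ep Hl; subst a2.
case: w Dw => [[u f] hw]; rewrite /pv /= => Du.
have Hb : b1 = b2 -> False.
  move=> Eb; subst b2; move: Hne; rewrite -val_eqE /= eqxx //.
rewrite /= /gsrc /gtgt -!val_eqE /= !xpair_eqE.
case/orP=> /andP[/eqP e1 /eqP f1] /orP[] /andP[/eqP e2 /eqP f2].
- by apply: Hb; apply: (gsrc_flag_inj (a:=a1)); [rewrite e1 | rewrite f1 f2].
- by move: Hl; rewrite e1 e2 eqxx.
- by move: Hl; rewrite e1 e2 eqxx.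
- by apply: Hb; apply: (gtgt_flag_inj (a:=a1)); [rewrite e1 | rewrite f1 f2].
Qed.

Definition liftb (a : arr Q) (x : GV) : bool :=
  if src a == pv x then
    (if D (src a) == dC then (if (D (tgt a) == dC) && cnj M a then ~~ (val x).2 else (val x).2)
     else false)
  else (if D (tgt a) == dC then (val x).2 else false).

Lemma liftb_ok a x : garr_ok M (a, liftb a x).
Proof.
rewrite /garr_ok /doubled /liftb /=; case: ifP => _;
  case: (D (src a)); case: (D (tgt a)) => //=; by rewrite implybT.
Qed.

Definition lifta a x : GA := exist _ (a, liftb a x) (liftb_ok a x).
Definition liftv a x : GV := if src a == pv x then gtgt (lifta a x) else gsrc (lifta a x).
Definition lend a x : GV := if src a == pv x then gsrc (lifta a x) else gtgt (lifta a x).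

Lemma lend_eq a x v : joins a (pv x) v -> lend a x = x.
Proof.
case: x => [[u f] hx]; rewrite /lend /pv /= => J; rewrite /pv /= in J.
case: ifP => Hs; apply: val_inj => /=.
- rewrite /gsrc_flag /liftb /pv /= Hs (eqP Hs); congr pair.
  move: hx; rewrite /gvert_ok /=.
  by case: (D u); case: (D (tgt a)); case: (cnj M a); case: f.
- have Ht : tgt a = u.
    by case/orP: J => /andP[/eqP h1 /eqP h2] //; rewrite h1 eqxx in Hs.
  rewrite /gtgt_flag /liftb /pv /= Hs Ht; congr pair.
  move: hx; rewrite /gvert_ok /=.
  by case: (D u); case: (D (src a)); case: f.
Qed.

Lemma lift_joins a x v : joins a (pv x) v ->
  @joins G (lifta a x) x (liftv a x) /\ pv (liftv a x) = v.
Proof.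
move=> J; have E := lend_eq J; move: E; rewrite /lend /liftv /joins /=.
case: ifP => Hs E; split.
- by rewrite E !eqxx.
- case/orP: J => /andP[/eqP h1 /eqP h2]; first by rewrite /pv /= h2.
  by rewrite /pv /= h2 -(eqP Hs) h1.
- by rewrite E !eqxx orbT.
- case/orP: J => /andP[/eqP h1 /eqP h2]; last by rewrite /pv /= h1.
  by rewrite h1 eqxx in Hs.
Qed.

Lemma lend_inj a a' x x' v v' : lifta a x = lifta a' x' -> a = a' -> pv x = pv x' ->
  joins a (pv x) v -> joins a' (pv x') v' -> x = x'.
Proof.
move=> E ea ep J J'; rewrite -(lend_eq J) -(lend_eq J') /lend; subst a'.
by rewrite ep E.
Qed.

Fixpoint LV (A : nat -> arr Q) (x : GV) k : GV :=
  if k is k'.+1 then liftv (A k') (LV A x k') else x.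
Definition LA A x k := lifta (A k) (LV A x k).

Lemma L_proj m P A x : wf m P A -> pv x = P 0 -> forall k, k <= m -> pv (LV A x k) = P k.
Proof.
move=> H Hx; elim=> [|k IH] Hk //=.
have J := H k Hk; rewrite -(IH (ltnW Hk)) in J; exact: (lift_joins J).2.
Qed.

Lemma L_wf m P A x : wf m P A -> pv x = P 0 -> @wf G m (LV A x) (LA A x).
Proof.
move=> H Hx k Hk /=.
have J := H k Hk; rewrite -(L_proj H Hx (ltnW Hk)) in J; exact: (lift_joins J).1.
Qed.

Lemma LV_shift A x i n : (forall k, A (k + n) = A k) -> LV A x i = LV A x (i + n) ->
  forall j, LV A x (i + j) = LV A x (i + n + j).
Proof.
move=> Hp E; elim=> [|j IH]; first by rewrite !addn0.
by rewrite !addnS /= IH; congr liftv; rewrite addnAC Hp.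
Qed.

Lemma two_lift (y z w : GV) : pv y = pv z -> pv w = pv z -> y != z -> w != z -> w = y.
Proof.
case: y z w => [[a1 f1] h1] [[a2 f2] h2] [[a3 f3] h3]; rewrite /pv /= => e1 e2.
rewrite -!val_eqE /= !xpair_eqE => n1 n2; apply: val_inj => /=.
rewrite e1 e2; rewrite e1 eqxx /= in n1; rewrite e2 eqxx /= in n2.
by congr pair; move: n1 n2; clear; case: f1; case: f2; case: f3.
Qed.

Lemma lift_reach u v (x : GV) : reach u v -> pv x = u -> exists y, @reach G x y /\ pv y = v.
Proof.
case=> st [Hw Hl] Hx; case: st Hw Hl => [|s0 s'] Hw Hl.
  by exists x; split; [exists [::] | rewrite Hx -Hl].
set st := s0 :: s' in Hw Hl.
have H := walk_wf u s0.1 Hw.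
have Hx' : pv x = nth u (u :: map snd st) 0 by [].
exists (LV (nth s0.1 (map fst st)) x (size st)); split.
  exact: (wf_reach (L_wf H Hx') (leqnn _)).
by rewrite (L_proj H Hx' (leqnn _)) -Hl -(size_map snd) nth_last_walk.
Qed.

End Gam.

Lemma modS_last n k : 0 < n -> n %| k.+1 -> (k %% n).+1 = n.
Proof.
move=> n0 Hd; have hk := ltn_pmod k n0.
have : (k %% n).+1 %% n = 0 by rewrite -addn1 modnDml addn1; apply/eqP.
move: (k %% n) hk => r hk.
case: (ltngtP r.+1 n) => [lt|gt|->] //; first by rewrite modn_small.
by rewrite ltnNge hk in gt.
Qed.

Lemma modeq_next n i j : 0 < n -> i < j -> j < i + n + n -> i %% n = j %% n -> j = i + n.
Proof.
move=> n0 lij ljn E.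
have Ed : (j - i) %% n = 0.
  have : (i + (j - i) == i + 0 %[mod n]) by rewrite subnKC ?(ltnW lij) // addn0 E.
  by rewrite eqn_modDl mod0n => /eqP.
have := divn_eq (j - i) n; rewrite Ed addn0.
move: ((j - i) %/ n) => q; case: q => [|[|q]]; rewrite ?mul0n ?mul1n => h.
- move: lij; rewrite -subn_gt0 h //.
- by rewrite -h subnKC // ltnW.
- move: h ljn; rewrite !mulSn; move: (q * n) => t h; clear E Ed; lia.
Qed.

Lemma modS_neq n m : 1 < n -> m.+1 %% n != m %% n.
Proof.
move=> n1; have n0 : 0 < n by apply: ltn_trans n1.
rewrite modnS; case: ifP => Hd.
  have := modS_last n0 Hd; move: (m %% n) => r h; apply/eqP => h'.
  by move: n1; rewrite -h -h'.
by move: (m %% n) => r; apply/eqP => h; apply: (n_Sn r); rewrite h.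
Qed.

Section CL.
Variables (Q : quiver) (M : modulation Q).
Local Notation GV := (GVert M).
Local Notation GA := (GArr M).
Local Notation G := (Gamma M).

Lemma cycle_lift u (st : seq (arr Q * vert Q)) (x : GV) : cycle_walk u st -> pv x = u ->
  exists F : {set GA}, [/\ @is_cycle G F, (forall b, b \in F -> @reach G x (@src G b)) &
    forall a, a \in map fst st <-> exists2 b, b \in F & pa b = a].
Proof.
case/and4P => Hne /andP[Hw Hua] Hus /eqP Hend Hx.
case: st Hne Hw Hua Hus Hend => [//|s0 s'] _ Hw Hua Hus Hend.
set st := s0 :: s' in Hw Hua Hus Hend *.
set n := size st.
have n0 : 0 < n by [].
pose P := nth u (u :: map snd st); pose A := nth s0.1 (map fst st).
have H : wf n P A := walk_wf u s0.1 Hw.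
have Pn : P n = P 0 by rewrite /P /n -(size_map snd) nth_last_walk.
have IvP : forall i j, 0 < i -> i < j -> j <= n -> P i != P j.
  move=> [|i] [|j] // _ lij ljn.
  have hi : i < size (map snd st) by rewrite size_map; apply: leq_trans (ltnW lij) ljn.
  have hj : j < size (map snd st) by rewrite size_map.
  rewrite /P /= nth_uniq //; apply/eqP => e; by rewrite e ltnn in lij.
have IaA : forall i j, i < j -> j < n -> A i != A j.
  move=> i j lij ljn.
  have hi : i < size (map fst st) by rewrite size_map; apply: ltn_trans ljn.
  have hj : j < size (map fst st) by rewrite size_map.
  rewrite /A nth_uniq //; apply/eqP => e; by rewrite e ltnn in lij.
have memA : forall a, a \in map fst st <-> exists2 k, k < n & a = A k.
  move=> a; split.
    move=> Ha; exists (index a (map fst st)).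
      have : index a (map fst st) < size (map fst st) by rewrite index_mem.
      by rewrite size_map.
    by rewrite /A nth_index.
  by case=> k Hk ->; rewrite /A mem_nth // size_map.
pose Pp k := P (k %% n); pose Ap k := A (k %% n).
have Hper : forall k, joins (Ap k) (Pp k) (Pp k.+1).
  move=> k; rewrite /Ap /Pp; have hk := ltn_pmod k n0.
  rewrite modnS; case: ifP => Hd; last exact: H.
  have e := modS_last n0 Hd; have := H (k %% n) hk; by rewrite e Pn.
have Hwf : forall m, wf m Pp Ap := fun m k _ => Hper k.
have Hx' : pv x = Pp 0 by rewrite /Pp mod0n.
pose L := LV Ap x.
have HL : forall k, pv (L k) = Pp k := fun k => L_proj (Hwf k) Hx' (leqnn k).
have HLw : forall m, @wf G m L (LA Ap x) := fun m => L_wf (Hwf m) Hx'.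
have Aper : forall k, Ap (k + n) = Ap k by move=> k; rewrite /Ap modnDr.
have PpD : forall k, Pp (n + k) = Pp k by move=> k; rewrite /Pp modnDl.
have ApD : forall k, Ap (n + k) = Ap k by move=> k; rewrite /Ap modnDl.
have PpP : forall k, k <= n -> Pp k = P k.
  move=> k; rewrite leq_eqVlt => /orP[/eqP->|hk]; first by rewrite /Pp modnn Pn.
  by rewrite /Pp modn_small.
have ApA : forall k, k < n -> Ap k = A k by move=> k hk; rewrite /Ap modn_small.
have Pinj : forall i j, i < n -> j < n -> P i = P j -> i = j.
  suff S : forall i j, i < j -> j < n -> P i != P j.
    move=> i j hi hj e; case: (ltngtP i j) => // lt.
      by move: (S i j lt hj); rewrite e eqxx.
    by move: (S j i lt hi); rewrite e eqxx.
  move=> i j lij ljn; case: i lij => [|i] lij.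
    by rewrite -Pn eq_sym; apply: IvP => //; apply: ltnW.
  by apply: IvP => //; apply: ltnW.
have Ainj : forall i j, i < n -> j < n -> A i = A j -> i = j.
  move=> i j hi hj e; case: (ltngtP i j) => // lt.
    by move: (IaA i j lt hj); rewrite e eqxx.
  by move: (IaA j i lt hi); rewrite e eqxx.
have Ppmod : forall i j, Pp i = Pp j -> i %% n = j %% n :=
  fun i j h => Pinj _ _ (ltn_pmod i n0) (ltn_pmod j n0) h.
have Apmod : forall i j, Ap i = Ap j -> i %% n = j %% n :=
  fun i j h => Ainj _ _ (ltn_pmod i n0) (ltn_pmod j n0) h.
have LAeq : forall i j, Ap i = Ap j -> Pp i = Pp j -> LA Ap x i = LA Ap x j -> L i = L j.
  move=> i j ea ep E.
  apply: (lend_inj (v:=Pp i.+1) (v':=Pp j.+1) E ea); first by rewrite !HL.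
    by rewrite HL; exact: Hper.
  by rewrite HL; exact: Hper.
have R0 : @reach G x x by exists [::].
case E1 : (L n == x).
  have Iv : forall i j, 0 < i -> i < j -> j <= n -> L i != L j.
    move=> i j i0 lij ljn; apply/eqP => e; have := IvP i j i0 lij ljn.
    by rewrite -PpP ?(leq_trans (ltnW lij) ljn) // -PpP // -!HL e eqxx.
  have Ia : forall i j, i < j -> j < n -> LA Ap x i != LA Ap x j.
    move=> i j lij ljn; apply/eqP => e; have e' : Ap i = Ap j := congr1 (@pa _ M) e.
    have := IaA i j lij ljn; by rewrite -!ApA ?(ltn_trans lij ljn) // e' eqxx.
  have [F [C Rf Fm]] := @cycle_out G x n L (LA Ap x) R0 n0 (HLw n) (eqP E1) Iv Ia.
  exists F; split => // a; rewrite memA; split.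
    case=> k hk ->; exists (LA Ap x k); [by apply/Fm; exists k | exact: ApA].
  by case=> b /Fm [k hk ->] <-; exists k => //; exact: ApA.
have Lcontra : forall i, i <= n -> L i = L (i + n) -> L (n + n) = L n.
  move=> i hi e; have := LV_shift Aper e (n - i).
  have e1 : i + (n - i) = n by apply: subnKC.
  have e2 : i + n + (n - i) = n + n by rewrite addnAC e1.
  by rewrite e1 e2.
case E2 : (L (n + n) == x).
  have Iv : forall i j, 0 < i -> i < j -> j <= n + n -> L i != L j.
    move=> i j i0 lij ljn; apply/eqP => e.
    have em := Ppmod _ _ (etrans (esym (HL i)) (etrans (congr1 (@pv _ M) e) (HL j))).
    have hj : j < i + n + n by move: i0 ljn; clear; lia.
    have ej := modeq_next n0 lij hj em.
    have hi : i <= n by move: ljn; rewrite ej; clear; lia.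
    have := Lcontra i hi; rewrite -ej => /(_ e); rewrite (eqP E2) => e2.
    by rewrite e2 eqxx in E1.
  have Ia : forall i j, i < j -> j < n + n -> LA Ap x i != LA Ap x j.
    move=> i j lij ljn; apply/eqP => e; have e' : Ap i = Ap j := congr1 (@pa _ M) e.
    have em := Apmod _ _ e'.
    have hj : j < i + n + n by move: ljn; clear; lia.
    have ej := modeq_next n0 lij hj em.
    have ep : Pp i = Pp j by rewrite /Pp em.
    have hi : i <= n by move: ljn; rewrite ej; clear; lia.
    have := Lcontra i hi; rewrite -ej => /(_ (LAeq _ _ e' ep e)); rewrite (eqP E2) => e2.
    by rewrite e2 eqxx in E1.
  have nn0 : 0 < n + n by rewrite addn_gt0 n0.
  have [F [C Rf Fm]] := @cycle_out G x (n + n) L (LA Ap x) R0 nn0 (HLw _) (eqP E2) Iv Ia.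
  exists F; split => // a; rewrite memA; split.
    case=> k hk ->; exists (LA Ap x k); last exact: ApA.
    by apply/Fm; exists k => //; apply: ltn_addr.
  case=> b /Fm [k hk ->] <-; exists (k %% n); first exact: ltn_pmod.
  by [].
have e2n : L (n + n) = L n.
  apply: (@two_lift _ M (L n) x (L (n + n))); rewrite ?HL ?Hx' ?E1 ?E2 //.
    by rewrite /Pp modnn mod0n.
  by rewrite /Pp modnDl modnn mod0n.
pose L' k := L (n + k); pose B' k := LA Ap x (n + k).
have R1 : @reach G x (L' 0) by rewrite /L' addn0; exact: (wf_reach (HLw n) (leqnn n)).
have W' : @wf G n L' B'.
  by move=> k hk; rewrite /L' /B' addnS; apply: (HLw (n + k).+1).
have C' : L' n = L' 0 by rewrite /L' addn0.
have Iv : forall i j, 0 < i -> i < j -> j <= n -> L' i != L' j.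
  move=> i j i0 lij ljn; apply/eqP => e; have := IvP i j i0 lij ljn.
  have e' := congr1 (@pv _ M) e; rewrite !HL !PpD in e'.
  by rewrite -PpP ?(leq_trans (ltnW lij) ljn) // -PpP // e' eqxx.
have Ia : forall i j, i < j -> j < n -> B' i != B' j.
  move=> i j lij ljn; apply/eqP => e; have e' : Ap (n + i) = Ap (n + j) := congr1 (@pa _ M) e.
  rewrite !ApD in e'.
  have := IaA i j lij ljn; by rewrite -!ApA ?(ltn_trans lij ljn) // e' eqxx.
have [F [C Rf Fm]] := @cycle_out G x n L' B' R1 n0 W' C' Iv Ia.
exists F; split => // a; rewrite memA; split.
  case=> k hk ->; exists (B' k); [by apply/Fm; exists k | exact: (etrans (ApD k) (ApA k hk))].
by case=> b /Fm [k hk ->] <-; exists k => //; exact: (etrans (ApD k) (ApA k hk)).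
Qed.
End CL.

Lemma part1 (Q : quiver) (M : modulation Q) :
  connected Q -> all_components_one_cycle (Gamma M) -> at_most_one_cycle Q.
Proof.
move=> [[u0 _] Hc] Hall E1 E2 [u1 [st1 [cw1 ->]]] [u2 [st2 [cw2 ->]]].
pose x1 : GVert M := exist _ (u1, false) isT.
have [st [Hch Hend]] := Hc u1 u2.
have R12 : reach u1 u2 by exists st; split => //; case/andP: Hch.
have [x2 [Rx Hx2]] := lift_reach (M:=M) R12 (erefl : pv x1 = u1).
have [F1 [C1 R1 M1]] := cycle_lift cw1 (erefl : pv x1 = u1).
have [F2 [C2 R2 M2]] := cycle_lift cw2 Hx2.
have [E [CE JE UE]] := Hall x1.
have eF1 : F1 = E.
  by apply: UE => // b hb; apply: reach_joined; exact: R1.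
have eF2 : F2 = E.
  by apply: UE => // b hb; apply: reach_joined; exact: reach_trans Rx (R2 _ hb).
apply/setP => a; rewrite !inE; apply/idP/idP => h.
  have [b hb pb] := (M1 a).1 h; apply/(M2 a).2; exists b => //; by rewrite eF2 -eF1.
have [b hb pb] := (M2 a).1 h; apply/(M1 a).2; exists b => //; by rewrite eF1 -eF2.
Qed.

Lemma part2 (Q : quiver) (M : modulation Q) :
  connected Q -> all_components_one_cycle (Gamma M) -> is_tree Q ->
   exists (u : vert Q) (st : seq (arr Q * vert Q)),
     [/\ chain u st, st != [::],
         mdr M u != dC, mdr M (chain_end u st) != dC &
         all (fun v => mdr M v == dC) (take (size st).-1 (map snd st))].
Proof.
move=> [[u0 _] _] Hall [_ Hnc].
have NL := noloop Hnc.
pose x0 : GVert M := exist _ (u0, false) isT.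
have [E [[y [st [cw _]]] _ _]] := Hall x0.
case/and4P: cw => Hne /andP[Hw Hua] Hus /eqP Hend.
case: st Hne Hw Hua Hus Hend => [//|s0 s'] _ Hw Hua Hus Hend.
set st := s0 :: s' in Hw Hua Hus Hend *.
set n := size st.
have n0 : 0 < n by [].
pose W := nth y (y :: map snd st); pose B := nth s0.1 (map fst st).
have H : @wf (Gamma M) n W B := walk_wf y s0.1 Hw.
have Wn : W n = W 0 by rewrite /W /n -(size_map snd) nth_last_walk.
have IaB : forall i j, i < j -> j < n -> B i != B j.
  move=> i j lij ljn.
  have hi : i < size (map fst st) by rewrite size_map; apply: ltn_trans ljn.
  have hj : j < size (map fst st) by rewrite size_map.
  rewrite /B nth_uniq //; apply/eqP => e; by rewrite e ltnn in lij.
have Binj : forall i j, i < n -> j < n -> B i = B j -> i = j.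
  move=> i j hi hj e; case: (ltngtP i j) => // lt.
    by move: (IaB i j lt hj); rewrite e eqxx.
  by move: (IaB j i lt hi); rewrite e eqxx.
have [k1 hk1 Dk1] : exists2 k1, k1 < n & mdr M (pv (W k1)) != dC.
  case: (boolP [exists k : 'I_n, mdr M (pv (W k)) != dC]).
    by case/existsP => [[k hk] /= h]; exists k.
  rewrite negb_exists => /forallP Hall'.
  have allC : forall k, k < n -> mdr M (pv (W k)) = dC.
    by move=> k hk; have := Hall' (Ordinal hk); rewrite /= negbK => /eqP.
  have [E' cE'] : exists E, @is_cycle Q E.
    apply: (@nb_cycle Q n (fun k => pv (W k)) (fun k => pa (B k)) n0).
  - by move=> k hk; exact: G_joins_proj (H k hk).
  - by rewrite /= Wn.
  - move=> k hk; apply/eqP => e.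
    exact: (local (H k (ltnW hk)) (H k.+1 hk) (IaB k k.+1 (ltnSn k) hk) e (allC k.+1 hk) (NL _)).
  by case: (Hnc _ cE').
pose Wp k := W (k %% n); pose Bp k := B (k %% n).
have Hper : forall k, @joins (Gamma M) (Bp k) (Wp k) (Wp k.+1).
  move=> k; rewrite /Bp /Wp; have hk := ltn_pmod k n0.
  rewrite modnS; case: ifP => Hd; last exact: H.
  have e := modS_last n0 Hd; have := H (k %% n) hk; by rewrite e Wn.
pose V k := Wp (k1 + k); pose Cq k := Bp (k1 + k).
have Vj : forall k, @joins (Gamma M) (Cq k) (V k) (V k.+1).
  by move=> k; rewrite /V /Cq addnS; apply: Hper.
have V0 : V 0 = W k1 by rewrite /V /Wp addn0 modn_small.
have Vn : V n = W k1 by rewrite /V /Wp modnDr modn_small.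
have exj : exists j, (0 < j) && (mdr M (pv (V j)) != dC).
  by exists n; rewrite n0 Vn.
case: (ex_minnP exj) => j /andP[j0 Dj] jmin.
have jn : j <= n by apply: jmin; rewrite n0 Vn.
have midC : forall k, 0 < k -> k < j -> mdr M (pv (V k)) = dC.
  move=> k k0 kj; apply/eqP; apply/negPn/negP => h.
  by have := jmin k; rewrite k0 h => /(_ isT); rewrite leqNgt kj.
pose Pq k := pv (V k); pose Aq k := pa (Cq k).
have Wq : wf j Pq Aq by move=> k _; exact: G_joins_proj (Vj k).
have nb : forall k, k.+1 < j -> Aq k != Aq k.+1.
  move=> k hk; apply/eqP => e.
  have n1 : 1 < n by move: hk jn; clear; lia.
  have neq : Cq k != Cq k.+1.
    rewrite /Cq /Bp addnS; apply/eqP => eb.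
    have := Binj _ _ (ltn_pmod _ n0) (ltn_pmod _ n0) eb => em.
    by move: (modS_neq (k1 + k) n1); rewrite em eqxx.
  exact: (local (Vj k) (Vj k.+1) neq e (midC k.+1 isT hk) (NL _)).
case: (eqVneq (Pq 0) (Pq j)) => [e0j|n0j].
  have [E' cE'] := @nb_cycle Q j Pq Aq j0 Wq (esym e0j) nb.
  by case: (Hnc _ cE').
have [m' [P' [A' [W' E0 Em In Sub]]]] := shorten_walk Wq.
have m0 : 0 < m'.
  rewrite lt0n; apply/eqP => e; move: n0j; rewrite -E0 -Em e eqxx //.
exists (P' 0), (mkst m' P' A'); split.
- exact: inj_chain W' In.
- by rewrite -size_eq0 size_mkst -lt0n.
- by rewrite E0 /Pq V0.
- by rewrite wf_chain_end // Em.
rewrite size_mkst map_snd_mkst -map_take take_iota.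
apply/allP => v /mapP [k]; rewrite mem_iota => /andP[_ hk] ->.
have hk' : k.+1 < m' by move: hk m0; clear; lia.
have [k0 hk0 ek] := Sub k.+1 (ltnW hk').
case: (posnP k0) => [z|pk0].
  by move: (In 0 k.+1 isT (ltnW hk')); rewrite ek E0 z eqxx.
case: (ltngtP k0 j) => [lkj|gkj|ekj].
- by rewrite ek midC.
- by move: gkj; rewrite ltnNge hk0.
- by move: (In k.+1 m' hk' (leqnn m')); rewrite ek Em ekj eqxx.
Qed.

Theorem lemma6p3 (Q : quiver) (M : modulation Q) :
  connected Q ->
  all_components_one_cycle (Gamma M) ->
  at_most_one_cycle Q /\
  (is_tree Q ->
   exists (u : vert Q) (st : seq (arr Q * vert Q)),
     [/\ chain u st, st != [::],
         mdr M u != dC, mdr M (chain_end u st) != dC &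
         all (fun v => mdr M v == dC) (take (size st).-1 (map snd st))]).
Proof.
move=> Hc Ha; split; first exact: part1.
exact: part2.
Qed.
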